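(* Let $v$ be a typical weight and let $X$ be an initial space such that for every $f\in X$ and $0\le r<1$ the function $f_r(z)=f(rz)$ belongs to $X$, and $\sup_{0\le r<1}\|f_r\|_X\le C\|f\|_X$ for a constant $C$ independent of $f$. Let $T$ be an intrinsic operator on $\mathcal{H}(\mathbb{D})$ such that $Tf_r\in H_{v,0}$ for all $f\in X$ and all $0\le r<1$. If $T:X\to H_v$ is weakly compact, then $T:X\to H_{v,0}$ is bounded.
   Context: $\mathcal{H}(\mathbb{D})$ is the space of holomorphic functions on the unit disk $\mathbb{D}$ with the topology $\tau_{uc}$ of uniform convergence on compact subsets. A linear operator $T$ on $\mathcal{H}(\mathbb{D})$ is intrinsic if it maps $\tau_{uc}$-convergent sequences to $\tau_{uc}$-convergent sequences. An initial space is a Banach space $X\subset\mathcal{H}(\mathbb{D})$ containing the polynomials such that every sequence in the closed unit ball of $X$ has a subsequence converging in $\tau_{uc}$ to some function in $X$. A typical weight is a continuous radial $v:\mathbb{D}\to(0,1]$, non-increasing in $|z|$, with $v(z)\to0$ as $|z|\to1$. $H_v=\{f\in\mathcal{H}(\mathbb{D}):\sup_z v(z)|f(z)|<\infty\}$ with that supremum as norm, and $H_{v,0}=\{f:\lim_{|z|\to1}v(z)|f(z)|=0\}$. *)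

(* Defs.v *)
From Stdlib Require Import Reals Lra List.
From Coquelicot Require Import Coquelicot.
Open Scope R_scope.

Definition Dk : Type := {z : C | Cmod z < 1}.

(** Functions on the disk (candidates for elements of H(D)). *)
Definition HD : Type := Dk -> C.

Definition fzero : HD := fun _ => RtoC 0.
Definition fadd (f g : HD) : HD := fun z => Cplus (f z) (g z).
Definition fscal (c : C) (f : HD) : HD := fun z => Cmult c (f z).
Definition fsub (f g : HD) : HD := fun z => Cminus (f z) (g z).

Definition holo (f : HD) : Prop :=
  forall z : Dk, exists l : C, forall eps, 0 < eps -> exists del, 0 < del /\
    forall w : Dk, 0 < Cmod (Cminus (proj1_sig w) (proj1_sig z)) < del ->
      Cmod (Cminus (Cdiv (Cminus (f w) (f z)) (Cminus (proj1_sig w) (proj1_sig z))) l) < eps.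

Fixpoint cpoly (a : nat -> C) (n : nat) (z : C) : C :=
  match n with
  | O => a O
  | S m => Cplus (cpoly a m z) (Cmult (a n) (Cpow z n))
  end.
Definition poly_fun (a : nat -> C) (n : nat) : HD := fun z => cpoly a n (proj1_sig z).

(** Convergence in tau_uc (uniform convergence on compact subsets of D),
    expressed via the exhausting closed subdisks |z| <= r, r < 1. *)
Definition uc_conv (fs : nat -> HD) (g : HD) : Prop :=
  forall r, 0 <= r < 1 -> forall eps, 0 < eps -> exists N : nat,
    forall n, (N <= n)%nat -> forall z : Dk, Cmod (proj1_sig z) <= r ->
      Cmod (Cminus (fs n z) (g z)) < eps.

Definition linear_op_HD (T : HD -> HD) : Prop :=
  (forall f, holo f -> holo (T f)) /\
  (forall f g, holo f -> holo g -> T (fadd f g) = fadd (T f) (T g)) /\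
  (forall c f, holo f -> T (fscal c f) = fscal c (T f)).

Definition intrinsic (T : HD -> HD) : Prop :=
  forall (fs : nat -> HD) (g : HD), (forall n, holo (fs n)) -> holo g ->
    uc_conv fs g -> exists h : HD, holo h /\ uc_conv (fun n => T (fs n)) h.

Definition banach_subspace (X : HD -> Prop) (N : HD -> R) : Prop :=
  (forall f, X f -> holo f) /\
  X fzero /\
  (forall f g, X f -> X g -> X (fadd f g)) /\
  (forall c f, X f -> X (fscal c f)) /\
  (forall f, X f -> 0 <= N f) /\
  (forall f, X f -> N f = 0 -> f = fzero) /\
  (forall c f, X f -> N (fscal c f) = Cmod c * N f) /\
  (forall f g, X f -> X g -> N (fadd f g) <= N f + N g) /\
  (forall fs : nat -> HD, (forall n, X (fs n)) ->
     (forall eps, 0 < eps -> exists M : nat, forall m n, (M <= m)%nat -> (M <= n)%nat ->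
        N (fsub (fs m) (fs n)) < eps) ->
     exists g, X g /\ forall eps, 0 < eps -> exists M : nat, forall n, (M <= n)%nat ->
        N (fsub (fs n) g) < eps).

Definition initial_space (X : HD -> Prop) (N : HD -> R) : Prop :=
  banach_subspace X N /\
  (forall a n, X (poly_fun a n)) /\
  (forall fs : nat -> HD, (forall n, X (fs n) /\ N (fs n) <= 1) ->
     exists (phi : nat -> nat) (g : HD),
       (forall n, (phi n < phi (S n))%nat) /\ X g /\ uc_conv (fun n => fs (phi n)) g).

Definition typical_weight (v : Dk -> R) : Prop :=
  (forall z, 0 < v z <= 1) /\
  (forall z w, Cmod (proj1_sig z) = Cmod (proj1_sig w) -> v z = v w) /\
  (forall z w, Cmod (proj1_sig z) <= Cmod (proj1_sig w) -> v w <= v z) /\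
  (forall z eps, 0 < eps -> exists del, 0 < del /\ forall w : Dk,
      Cmod (Cminus (proj1_sig w) (proj1_sig z)) < del -> Rabs (v w - v z) < eps) /\
  (forall eps, 0 < eps -> exists rho, rho < 1 /\ forall z : Dk,
      rho < Cmod (proj1_sig z) -> v z < eps).

Definition Hv (v : Dk -> R) (f : HD) : Prop :=
  holo f /\ exists M, forall z, v z * Cmod (f z) <= M.

Definition Hv0 (v : Dk -> R) (f : HD) : Prop :=
  holo f /\ forall eps, 0 < eps -> exists rho, rho < 1 /\ forall z : Dk,
      rho < Cmod (proj1_sig z) -> v z * Cmod (f z) < eps.

(** Bounded linear functionals on H_v ( |phi f| <= M ||f||_v ). *)
Definition Hv_dual (v : Dk -> R) (phi : HD -> C) : Prop :=
  (forall f g, Hv v f -> Hv v g -> phi (fadd f g) = Cplus (phi f) (phi g)) /\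
  (forall c f, Hv v f -> phi (fscal c f) = Cmult c (phi f)) /\
  exists M, forall f K, Hv v f -> (forall z, v z * Cmod (f z) <= K) ->
    Cmod (phi f) <= M * K.

Definition weak_open (v : Dk -> R) (U : HD -> Prop) : Prop :=
  (forall f, U f -> Hv v f) /\
  forall g, U g -> exists (phis : list (HD -> C)) eps, 0 < eps /\
    List.Forall (Hv_dual v) phis /\
    forall f, Hv v f -> (forall phi, In phi phis -> Cmod (Cminus (phi f) (phi g)) < eps) -> U f.

Definition weak_closure (v : Dk -> R) (A : HD -> Prop) : HD -> Prop :=
  fun g => Hv v g /\ forall U, weak_open v U -> U g -> exists f, A f /\ U f.

Definition weak_compact (v : Dk -> R) (K : HD -> Prop) : Prop :=
  (forall f, K f -> Hv v f) /\
  forall F : (HD -> Prop) -> Prop, (forall U, F U -> weak_open v U) ->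
    (forall g, K g -> exists U, F U /\ U g) ->
    exists l : list (HD -> Prop), List.Forall F l /\ forall g, K g -> exists U, In U l /\ U g.

Definition rel_weak_compact (v : Dk -> R) (A : HD -> Prop) : Prop :=
  weak_compact v (weak_closure v A).

Definition weakly_compact_op (v : Dk -> R) (X : HD -> Prop) (N : HD -> R) (T : HD -> HD) : Prop :=
  (forall f, X f -> Hv v (T f)) /\
  rel_weak_compact v (fun h => exists f, X f /\ N f <= 1 /\ h = T f).

Lemma dil_pt_proof (r : R) (z : Dk) : Rabs r < 1 -> Cmod (Cmult (RtoC r) (proj1_sig z)) < 1.
Proof.
  intros H. rewrite Cmod_mult, Cmod_R. destruct z as [z Hz]; simpl.
  pose proof (Rabs_pos r). pose proof (Cmod_ge_0 z). nra.
Qed.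

Definition dil_pt (r : R) (z : Dk) : Dk :=
  match Rlt_dec (Rabs r) 1 with
  | left H => exist _ (Cmult (RtoC r) (proj1_sig z)) (dil_pt_proof r z H)
  | right _ => z
  end.

Definition dil (r : R) (f : HD) : HD := fun z => f (dil_pt r z).

(* Main.v *)
Require Import Defs.
From Stdlib Require Import Reals.
From Coquelicot Require Import Coquelicot.
From Stdlib Require Import Lra Lia List FunctionalExtensionality ClassicalEpsilon Classical ProofIrrelevance.
From mathcomp Require ssreflect ssrbool boolp classical_sets filter.
Open Scope R_scope.

Module UF.
Import ssreflect ssrbool boolp classical_sets filter.
Local Open Scope classical_set_scope.

Definition cofin : set_system nat := fun A => exists N, forall n, (N <= n)%nat -> A n.

Lemma cofin_proper : ProperFilter cofin.
Proof.
split.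
- move=> [N HN]. exact: (HN N (le_n N)).
- split.
  + by exists 0%nat.
  + move=> A B [N1 H1] [N2 H2]; exists (Nat.max N1 N2) => n Hn; split.
    * apply: H1; apply: (Nat.le_trans _ _ _ (Nat.le_max_l _ _) Hn).
    * apply: H2; apply: (Nat.le_trans _ _ _ (Nat.le_max_r _ _) Hn).
  + move=> P Q PQ [N HN]; exists N => n Hn; exact: PQ (HN n Hn).
Qed.

Lemma ultra_nat : exists U : (nat -> Prop) -> Prop,
 (forall A B, U A -> U B -> U (fun n => A n /\ B n)) /\
 (forall A B : nat -> Prop, U A -> (forall n, A n -> B n) -> U B) /\
 (forall N, U (fun n => (N <= n)%nat)) /\
 ~ U (fun _ => False) /\
 (forall A, U A \/ U (fun n => ~ A n)).
Proof.
have [G [GU sFG]] := ultraFilterLemma cofin_proper.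
exists G; split; [|split; [|split; [|split]]].
- move=> A B HA HB. exact: (@filterI _ G _ A B HA HB).
- move=> A B HA HAB. exact: (@filterS _ G _ A B HAB HA).
- move=> N; apply: sFG; by exists N.
- exact: (@filter_not_empty _ G _).
- move=> A; exact: (@in_ultra_setVsetC _ G A GU).
Qed.
End UF.

Definition UFP (U : (nat -> Prop) -> Prop) : Prop :=
 (forall A B, U A -> U B -> U (fun n => A n /\ B n)) /\
 (forall A B : nat -> Prop, U A -> (forall n, A n -> B n) -> U B) /\
 (forall N, U (fun n => (N <= n)%nat)) /\
 ~ U (fun _ => False) /\
 (forall A, U A \/ U (fun n => ~ A n)).

Definition islim (U : (nat -> Prop) -> Prop) (a : nat -> R) (l : R) : Prop :=
  forall eps, 0 < eps -> U (fun k => Rabs (a k - l) < eps).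

Section UL.
Variable U : (nat -> Prop) -> Prop.
Hypothesis HU : UFP U.

Lemma U_and A B : U A -> U B -> U (fun n => A n /\ B n).
Proof. apply HU. Qed.
Lemma U_mono (A B : nat -> Prop) : U A -> (forall n, A n -> B n) -> U B.
Proof. apply HU. Qed.
Lemma U_ne (A : nat -> Prop) : U A -> exists n, A n.
Proof.
  intros H. apply NNPP. intros Hn. apply (proj1 (proj2 (proj2 (proj2 HU)))).
  apply (U_mono A); auto. intros n Hx. apply Hn. exists n; exact Hx.
Qed.
Lemma U_tail N : U (fun n => (N <= n)%nat).
Proof. apply HU. Qed.
Lemma U_ultra A : U A \/ U (fun n => ~ A n).
Proof. apply HU. Qed.

Lemma islim_unique a l1 l2 : islim U a l1 -> islim U a l2 -> l1 = l2.
Proof.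
  intros H1 H2. apply NNPP; intros Hne.
  assert (He : 0 < Rabs (l1 - l2) / 2) by (assert (0 < Rabs (l1 - l2)) by (apply Rabs_pos_lt; lra); lra).
  destruct (U_ne _ (U_and _ _ (H1 _ He) (H2 _ He))) as [n [Ha Hb]].
  pose proof (Rabs_triang (l1 - a n) (a n - l2)).
  replace (l1 - a n + (a n - l2)) with (l1 - l2) in H by ring.
  rewrite <- Rabs_Ropp in Ha. replace (- (a n - l1)) with (l1 - a n) in Ha by ring. lra.
Qed.

Lemma islim_exists a M : (forall k, Rabs (a k) <= M) -> exists l, islim U a l.
Proof.
  intros HM.
  set (S := fun t => U (fun k => t <= a k)).
  assert (Hb : bound S).
  { exists M. intros t Ht. apply Rnot_lt_le; intros Hlt.
    destruct (U_ne _ Ht) as [n Hn]. specialize (HM n). apply Rabs_le_between in HM. lra. }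
  assert (Hne : exists t, S t).
  { exists (- M). apply (U_mono (fun n => (0 <= n)%nat)); [apply U_tail|].
    intros n _. specialize (HM n). apply Rabs_le_between in HM. lra. }
  destruct (completeness S Hb Hne) as [l [Hub Hlub]].
  exists l. intros eps Heps.
  assert (H1 : U (fun k => l - eps < a k)).
  { assert (exists t, S t /\ l - eps < t).
    { apply NNPP; intros Hn. assert (l <= l - eps); [|lra].
      apply Hlub. intros t Ht. apply Rnot_lt_le. intros Hlt. apply Hn. exists t; auto. }
    destruct H as [t [Ht Hlt]]. apply (U_mono _ _ Ht). intros n Hn; lra. }
  assert (H2 : U (fun k => a k < l + eps)).
  { destruct (U_ultra (fun k => l + eps / 2 <= a k)) as [Hc|Hc].
    - exfalso. assert (l + eps/2 <= l) by (apply Hub; exact Hc). lra.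
    - apply (U_mono _ _ Hc). intros n Hn. apply Rnot_le_lt in Hn. lra. }
  apply (U_mono _ _ (U_and _ _ H1 H2)). intros n [Ha Hb']. apply Rabs_def1; lra.
Qed.

Lemma islim_lin a b la lb al be : islim U a la -> islim U b lb ->
  islim U (fun j => al * a j + be * b j) (al * la + be * lb).
Proof.
  intros Ha Hb eps Heps.
  set (e := eps / (2 * (Rabs al + Rabs be + 1))).
  assert (He : 0 < e). { unfold e. pose proof (Rabs_pos al); pose proof (Rabs_pos be).
    apply Rdiv_lt_0_compat; lra. }
  apply (U_mono _ _ (U_and _ _ (Ha e He) (Hb e He))). intros n [H1 H2].
  replace (al * a n + be * b n - (al * la + be * lb)) with (al * (a n - la) + be * (b n - lb)) by ring.
  eapply Rle_lt_trans; [apply Rabs_triang|]. rewrite !Rabs_mult.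
  pose proof (Rabs_pos al); pose proof (Rabs_pos be).
  assert (Rabs al * Rabs (a n - la) <= Rabs al * e) by (apply Rmult_le_compat_l; lra).
  assert (Rabs be * Rabs (b n - lb) <= Rabs be * e) by (apply Rmult_le_compat_l; lra).
  assert ((Rabs al + Rabs be) * e < eps).
  { assert (e * (2 * (Rabs al + Rabs be + 1)) = eps) by (unfold e; field; lra). nra. }
  nra.
Qed.

Lemma islim_bound a K l : (forall k, Rabs (a k) <= K) -> islim U a l -> Rabs l <= K.
Proof.
  intros HK Hl. apply Rnot_lt_le; intros Hlt.
  destruct (U_ne _ (Hl (Rabs l - K) ltac:(lra))) as [n Hn].
  pose proof (Rabs_triang (a n) (l - a n)). replace (a n + (l - a n)) with l in H by ring.
  rewrite <- Rabs_Ropp in Hn. replace (- (a n - l)) with (l - a n) in Hn by ring.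
  specialize (HK n). lra.
Qed.

Lemma islim_ge a m l : (forall k, m <= a k) -> islim U a l -> m <= l.
Proof.
  intros Hm Hl. apply Rnot_lt_le; intros Hlt.
  destruct (U_ne _ (Hl (m - l) ltac:(lra))) as [n Hn].
  apply Rabs_def2 in Hn. specialize (Hm n). lra.
Qed.

Lemma islim_zero a : (forall eps, 0 < eps -> exists N, forall k, (N <= k)%nat -> Rabs (a k) < eps) ->
  islim U a 0.
Proof.
  intros H eps Heps. destruct (H eps Heps) as [N HN].
  apply (U_mono _ _ (U_tail N)). intros n Hn. rewrite Rminus_0_r. auto.
Qed.

Definition ulim (a : nat -> R) : R := epsilon (inhabits 0) (fun l => islim U a l).

Lemma ulim_spec a M : (forall k, Rabs (a k) <= M) -> islim U a (ulim a).
Proof. intros HM. unfold ulim. apply epsilon_spec. exact (islim_exists a M HM). Qed.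

Lemma ulim_lin a b (al be : R) Ka Kb : (forall j, Rabs (a j) <= Ka) -> (forall j, Rabs (b j) <= Kb) ->
  ulim (fun j => al * a j + be * b j) = al * ulim a + be * ulim b.
Proof.
  intros Ha Hb. apply (islim_unique (fun j => al * a j + be * b j)).
  - apply (ulim_spec _ (Rabs al * Ka + Rabs be * Kb)). intros j.
    eapply Rle_trans; [apply Rabs_triang|]. rewrite !Rabs_mult.
    pose proof (Rabs_pos al); pose proof (Rabs_pos be). specialize (Ha j); specialize (Hb j).
    apply Rplus_le_compat; apply Rmult_le_compat_l; lra.
  - apply islim_lin; [apply (ulim_spec _ Ka Ha)|apply (ulim_spec _ Kb Hb)].
Qed.

Lemma ulim_bound a K : (forall j, Rabs (a j) <= K) -> Rabs (ulim a) <= K.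
Proof. intros H. exact (islim_bound a K _ H (ulim_spec a K H)). Qed.

End UL.


Lemma Cmod_le_abs (x y : R) : Cmod (x, y) <= Rabs x + Rabs y.
Proof.
  unfold Cmod; cbn [fst snd].
  rewrite <- (sqrt_pow2 (Rabs x + Rabs y)) by (pose proof (Rabs_pos x); pose proof (Rabs_pos y); lra).
  apply sqrt_le_1_alt.
  rewrite <- (pow2_abs x), <- (pow2_abs y).
  pose proof (Rabs_pos x); pose proof (Rabs_pos y). nra.
Qed.

Lemma fst_le_Cmod (c : C) : Rabs (fst c) <= Cmod c.
Proof. pose proof (Rmax_Cmod c). pose proof (Rmax_l (Rabs (fst c)) (Rabs (snd c))). lra. Qed.
Lemma snd_le_Cmod (c : C) : Rabs (snd c) <= Cmod c.
Proof. pose proof (Rmax_Cmod c). pose proof (Rmax_r (Rabs (fst c)) (Rabs (snd c))). lra. Qed.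

Lemma Cmod_tri3 (a b c : C) : Cmod (Cminus a c) <= Cmod (Cminus a b) + Cmod (Cminus b c).
Proof.
  replace (Cminus a c) with (Cplus (Cminus a b) (Cminus b c)).
  - apply Cmod_triangle.
  - destruct a, b, c; unfold Cminus, Cplus, Copp; simpl; f_equal; ring.
Qed.

Lemma Cmod_minus_sym (a b : C) : Cmod (Cminus a b) = Cmod (Cminus b a).
Proof.
  replace (Cminus a b) with (Copp (Cminus b a)).
  - apply Cmod_opp.
  - destruct a, b; unfold Cminus, Cplus, Copp; simpl; f_equal; ring.
Qed.

Definition wball (v : Dk -> R) (psi : HD -> C) (c : C) (eps : R) : HD -> Prop :=
  fun h => Hv v h /\ Cmod (Cminus (psi h) c) < eps.

Lemma wball_open v psi c eps : Hv_dual v psi -> weak_open v (wball v psi c eps).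
Proof.
  intros Hpsi. split.
  - intros f [Hf _]; exact Hf.
  - intros g [Hg Hgc]. exists (psi :: nil), (eps - Cmod (Cminus (psi g) c)).
    split; [lra|]. split.
    + constructor; [exact Hpsi | constructor].
    + intros f Hf Hphi. split; [exact Hf|].
      specialize (Hphi psi (or_introl eq_refl)).
      pose proof (Cmod_tri3 (psi f) (psi g) c). lra.
Qed.

Lemma list_bound v psi (F : (HD -> Prop) -> Prop) :
  (forall U, F U -> exists m : nat, U = wball v psi (RtoC 0) (INR m)) ->
  forall l, List.Forall F l -> exists B, forall U, In U l -> forall h, U h -> Cmod (psi h) <= B.
Proof.
  intros HF l. induction l as [|U l IH]; intros Hl.
  - exists 0. intros U [].
  - inversion Hl; subst. destruct (IH H2) as [B HB].
    destruct (HF U H1) as [m Hm]. exists (Rmax (INR m) B).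
    intros U' [<-|HU'] h Hh.
    + rewrite Hm in Hh. destruct Hh as [_ Hh].
      replace (Cminus (psi h) (RtoC 0)) with (psi h) in Hh
        by (destruct (psi h); unfold Cminus, Cplus, Copp, RtoC; simpl; f_equal; ring).
      pose proof (Rmax_l (INR m) B). lra.
    + pose proof (HB U' HU' h Hh). pose proof (Rmax_r (INR m) B). lra.
Qed.

Lemma wc_bounded v Cl psi : weak_compact v Cl -> Hv_dual v psi ->
  exists B, forall h, Cl h -> Cmod (psi h) <= B.
Proof.
  intros [HCl Hcov] Hpsi.
  set (F := fun U : HD -> Prop => exists m : nat, U = wball v psi (RtoC 0) (INR m)).
  destruct (Hcov F) as [l [Hl Hlc]].
  - intros U [m ->]. apply wball_open; exact Hpsi.
  - intros g Hg. destruct (INR_unbounded (Cmod (Cminus (psi g) (RtoC 0)))) as [m Hm].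
    exists (wball v psi (RtoC 0) (INR m)). split.
    + exists m; reflexivity.
    + split; [apply HCl; exact Hg| lra].
  - destruct (list_bound v psi F (fun U H => H) l Hl) as [B HB].
    exists B. intros h Hh. destruct (Hlc h Hh) as [U [HU HUh]]. exact (HB U HU h HUh).
Qed.

Lemma wc_seq v Cl (g : nat -> HD) : weak_compact v Cl -> (forall k, Cl (g k)) ->
  (forall p, Cl p -> exists psi c eps K0, Hv_dual v psi /\ Cmod (Cminus (psi p) c) < eps /\
       forall k, (K0 <= k)%nat -> ~ Cmod (Cminus (psi (g k)) c) < eps) -> False.
Proof.
  intros [HCl Hcov] Hg Hp.
  set (F := fun U : HD -> Prop => exists psi c eps K0, Hv_dual v psi /\
       (forall k, (K0 <= k)%nat -> ~ Cmod (Cminus (psi (g k)) c) < eps) /\ U = wball v psi c eps).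
  destruct (Hcov F) as [l [Hl Hlc]].
  - intros U [psi [c [eps [K0 [H1 [_ ->]]]]]]. apply wball_open; exact H1.
  - intros p Hpp. destruct (Hp p Hpp) as [psi [c [eps [K0 [H1 [H2 H3]]]]]].
    exists (wball v psi c eps). split.
    + exists psi, c, eps, K0. auto.
    + split; [apply HCl; exact Hpp| exact H2].
  - assert (HK : exists K1, forall U, In U l -> forall k, (K1 <= k)%nat -> ~ U (g k)).
    { clear Hlc. induction l as [|U l IH].
      - exists 0%nat. intros U [].
      - inversion Hl; subst. destruct (IH H2) as [K1 HK1].
        destruct H1 as [psi [c [eps [K0 [_ [H4 ->]]]]]].
        exists (Nat.max K0 K1). intros U' [<-|HU'] k Hk.
        + intros [_ Hc]. apply (H4 k); [lia|exact Hc].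
        + apply (HK1 U' HU' k). lia. }
    destruct HK as [K1 HK1].
    destruct (Hlc (g K1) (Hg K1)) as [U [HU HUg]].
    exact (HK1 U HU K1 (le_n _) HUg).
Qed.

Lemma dual_from v (L : (nat -> R) -> R) (w : nat -> Dk) (cf : nat -> C) :
  (forall j, Cmod (cf j) <= v (w j)) ->
  (forall a b (al be : R) Ka Kb, (forall j, Rabs (a j) <= Ka) -> (forall j, Rabs (b j) <= Kb) ->
      L (fun j => al * a j + be * b j) = al * L a + be * L b) ->
  (forall a K, (forall j, Rabs (a j) <= K) -> Rabs (L a) <= K) ->
  Hv_dual v (fun h => (L (fun j => fst (Cmult (cf j) (h (w j)))),
                       L (fun j => snd (Cmult (cf j) (h (w j)))))).
Proof.
  intros Hcf Hlin Hbd.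
  assert (Hb : forall h M, (forall z, v z * Cmod (h z) <= M) ->
     (forall j, Rabs (fst (Cmult (cf j) (h (w j)))) <= M) /\
     (forall j, Rabs (snd (Cmult (cf j) (h (w j)))) <= M)).
  { intros h M HM. assert (forall j, Cmod (Cmult (cf j) (h (w j))) <= M).
    { intros j. rewrite Cmod_mult. specialize (HM (w j)). pose proof (Cmod_ge_0 (h (w j))).
      pose proof (Hcf j). nra. }
    split; intros j; [pose proof (fst_le_Cmod (Cmult (cf j) (h (w j))))|
                      pose proof (snd_le_Cmod (Cmult (cf j) (h (w j))))]; specialize (H j); lra. }
  split; [|split].
  - intros f g [_ [Mf Hf]] [_ [Mg Hg]].
    destruct (Hb f Mf Hf) as [Hf1 Hf2]. destruct (Hb g Mg Hg) as [Hg1 Hg2].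
    rewrite (functional_extensionality (fun j => fst (Cmult (cf j) (fadd f g (w j))))
       (fun j => 1 * fst (Cmult (cf j) (f (w j))) + 1 * fst (Cmult (cf j) (g (w j))))).
    2:{ intros j. unfold fadd. destruct (cf j), (f (w j)), (g (w j)); simpl; ring. }
    rewrite (functional_extensionality (fun j => snd (Cmult (cf j) (fadd f g (w j))))
       (fun j => 1 * snd (Cmult (cf j) (f (w j))) + 1 * snd (Cmult (cf j) (g (w j))))).
    2:{ intros j. unfold fadd. destruct (cf j), (f (w j)), (g (w j)); simpl; ring. }
    rewrite (Hlin _ _ 1 1 Mf Mg Hf1 Hg1), (Hlin _ _ 1 1 Mf Mg Hf2 Hg2).
    unfold Cplus; simpl. f_equal; ring.
  - intros c f [_ [Mf Hf]]. destruct (Hb f Mf Hf) as [Hf1 Hf2].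
    rewrite (functional_extensionality (fun j => fst (Cmult (cf j) (fscal c f (w j))))
       (fun j => fst c * fst (Cmult (cf j) (f (w j))) + (- snd c) * snd (Cmult (cf j) (f (w j))))).
    2:{ intros j. unfold fscal. destruct c, (cf j), (f (w j)); simpl; ring. }
    rewrite (functional_extensionality (fun j => snd (Cmult (cf j) (fscal c f (w j))))
       (fun j => snd c * fst (Cmult (cf j) (f (w j))) + fst c * snd (Cmult (cf j) (f (w j))))).
    2:{ intros j. unfold fscal. destruct c, (cf j), (f (w j)); simpl; ring. }
    rewrite (Hlin _ _ _ _ Mf Mf Hf1 Hf2), (Hlin _ _ _ _ Mf Mf Hf1 Hf2).
    destruct c; unfold Cmult; simpl. f_equal; ring.
  - exists 2. intros f K _ HK. destruct (Hb f K HK) as [H1 H2].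
    pose proof (Hbd _ K H1). pose proof (Hbd _ K H2).
    pose proof (Cmod_le_abs (L (fun j => fst (Cmult (cf j) (f (w j)))))
                            (L (fun j => snd (Cmult (cf j) (f (w j)))))). lra.
Qed.


Lemma geo_ex : ex_series (fun j => (1/2) ^ (S j)).
Proof.
  apply (@ex_series_ext R_AbsRing R_NormedModule (fun j => scal (1/2) ((1/2)^j))).
  - intros j. simpl. reflexivity.
  - apply (@ex_series_scal_l R_AbsRing R_NormedModule). apply ex_series_geom. rewrite Rabs_pos_eq; lra.
Qed.

Lemma geo_sum : Series (fun j => (1/2) ^ (S j)) = 1.
Proof.
  rewrite (Series_ext _ (fun j => (1/2) * (1/2)^j)) by (intros; reflexivity).
  rewrite Series_scal_l, Series_geom by (rewrite Rabs_pos_eq; lra). field.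
Qed.

Definition sL (wt : nat -> R) (a : nat -> R) : R := Series (fun j => wt j * a j).

Section SL.
Variable wt : nat -> R.
Hypothesis Hwt : forall j, 0 <= wt j <= (1/2) ^ (S j).

Lemma sL_abs_bound a K : (forall j, Rabs (a j) <= K) -> forall j, Rabs (wt j * a j) <= K * (1/2)^(S j).
Proof.
  intros H j. rewrite Rabs_mult. specialize (Hwt j). specialize (H j).
  rewrite (Rabs_pos_eq (wt j)) by lra. pose proof (Rabs_pos (a j)). 
  assert (0 <= (1/2)^(S j)) by (apply pow_le; lra). nra.
Qed.

Lemma sL_ex_abs a K : (forall j, Rabs (a j) <= K) -> ex_series (fun j => Rabs (wt j * a j)).
Proof.
  intros H. apply (@ex_series_le R_AbsRing R_CompleteNormedModule _ (fun j => K * (1/2)^(S j))).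
  - intros j. change (norm (Rabs (wt j * a j))) with (Rabs (Rabs (wt j * a j))).
    rewrite Rabs_Rabsolu. apply sL_abs_bound; auto.
  - apply (@ex_series_ext R_AbsRing R_NormedModule (fun j => scal K ((1/2)^(S j)))); [intros; reflexivity|].
    apply (@ex_series_scal_l R_AbsRing R_NormedModule), geo_ex.
Qed.

Lemma sL_ex a K : (forall j, Rabs (a j) <= K) -> ex_series (fun j => wt j * a j).
Proof. intros H. apply ex_series_Rabs. eapply sL_ex_abs; eauto. Qed.

Lemma sL_lin a b (al be : R) Ka Kb : (forall j, Rabs (a j) <= Ka) -> (forall j, Rabs (b j) <= Kb) ->
  sL wt (fun j => al * a j + be * b j) = al * sL wt a + be * sL wt b.
Proof.
  intros Ha Hb. unfold sL.
  rewrite (Series_ext _ (fun j => al * (wt j * a j) + be * (wt j * b j))) by (intros; ring).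
  rewrite Series_plus.
  - rewrite !Series_scal_l. reflexivity.
  - apply (@ex_series_ext R_AbsRing R_NormedModule (fun j => scal al (wt j * a j))); [intros; reflexivity|].
    apply (@ex_series_scal_l R_AbsRing R_NormedModule). eapply sL_ex; eauto.
  - apply (@ex_series_ext R_AbsRing R_NormedModule (fun j => scal be (wt j * b j))); [intros; reflexivity|].
    apply (@ex_series_scal_l R_AbsRing R_NormedModule). eapply sL_ex; eauto.
Qed.

Lemma sL_bound a K : (forall j, Rabs (a j) <= K) -> Rabs (sL wt a) <= K.
Proof.
  intros H. unfold sL. eapply Rle_trans; [apply Series_Rabs; eapply sL_ex_abs; eauto|].
  eapply Rle_trans; [apply (Series_le _ (fun j => K * (1/2)^(S j)))|].
  - intros j. split; [apply Rabs_pos|]. apply sL_abs_bound; auto.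
  - apply (@ex_series_ext R_AbsRing R_NormedModule (fun j => scal K ((1/2)^(S j)))); [intros; reflexivity|].
    apply (@ex_series_scal_l R_AbsRing R_NormedModule), geo_ex.
  - rewrite Series_scal_l, geo_sum. lra.
Qed.
End SL.





Lemma Cminus_0_r (x : C) : Cminus x (RtoC 0) = x.
Proof. destruct x; unfold Cminus, Cplus, Copp, RtoC; simpl; f_equal; ring. Qed.

Lemma Cminus_self (x : C) : Cmod (Cminus x x) = 0.
Proof. replace (Cminus x x) with (RtoC 0). apply Cmod_0. destruct x; unfold Cminus, Cplus, Copp, RtoC; simpl; f_equal; ring. Qed.

Lemma Dk_eq (w z : Dk) : proj1_sig w = proj1_sig z -> w = z.
Proof. destruct w as [w Hw], z as [z Hz]; simpl; intros ->. f_equal. apply proof_irrelevance. Qed.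

Lemma holo_cont f : holo f -> forall z eps, 0 < eps -> exists del, 0 < del /\
  forall w : Dk, Cmod (Cminus (proj1_sig w) (proj1_sig z)) < del -> Cmod (Cminus (f w) (f z)) < eps.
Proof.
  intros Hf z eps Heps. destruct (Hf z) as [l Hl]. destruct (Hl 1 ltac:(lra)) as [d1 [Hd1 H1]].
  pose proof (Cmod_ge_0 l).
  exists (Rmin d1 (eps / (Cmod l + 1))). split.
  { apply Rmin_pos; [lra| apply Rdiv_lt_0_compat; lra]. }
  intros w Hw. pose proof (Rmin_l d1 (eps / (Cmod l + 1))). pose proof (Rmin_r d1 (eps / (Cmod l + 1))).
  set (d := Cminus (proj1_sig w) (proj1_sig z)) in *.
  destruct (Req_dec (Cmod d) 0) as [Hz0|Hz0].
  - apply Cmod_eq_0 in Hz0. assert (w = z).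
    { apply Dk_eq. destruct (proj1_sig w), (proj1_sig z). unfold d, Cminus, Cplus, Copp in Hz0; simpl in Hz0.
      injection Hz0; intros; f_equal; lra. }
    subst. rewrite Cminus_self; lra.
  - assert (Hd : 0 < Cmod d) by (pose proof (Cmod_ge_0 d); lra).
    assert (Hd1w : Cmod d < d1) by lra. specialize (H1 w (conj Hd Hd1w)). fold d in H1.
    set (q := Cdiv (Cminus (f w) (f z)) d) in *.
    assert (Hdnz : d <> RtoC 0) by (intros E; rewrite E, Cmod_0 in Hz0; lra).
    assert (Hq : Cmod q = Cmod (Cminus (f w) (f z)) / Cmod d) by (unfold q; apply Cmod_div; exact Hdnz).
    assert (Cmod q < Cmod l + 1).
    { pose proof (Cmod_tri3 q l (RtoC 0)) as Ht3.
      rewrite !Cminus_0_r in Ht3. lra. }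
    assert (Cmod (Cminus (f w) (f z)) = Cmod q * Cmod d) by (rewrite Hq; field; lra).
    rewrite H4. assert (Cmod d < eps / (Cmod l + 1)) by lra.
    assert (Cmod q * Cmod d < (Cmod l + 1) * (eps / (Cmod l + 1))).
    { pose proof (Cmod_ge_0 q). apply Rle_lt_trans with ((Cmod l + 1) * Cmod d).
      - apply Rmult_le_compat_r; lra.
      - apply Rmult_lt_compat_l; lra. }
    replace ((Cmod l + 1) * (eps / (Cmod l + 1))) with eps in H6 by (field; lra). lra.
Qed.

Lemma dil_pt_val r z : 0 <= r < 1 -> proj1_sig (dil_pt r z) = Cmult (RtoC r) (proj1_sig z).
Proof.
  intros Hr. unfold dil_pt. destruct (Rlt_dec (Rabs r) 1) as [H|H]; [reflexivity|].
  exfalso. rewrite Rabs_pos_eq in H by lra. lra.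
Qed.

Lemma dil_pt_close r z : 0 <= r < 1 -> Cmod (Cminus (proj1_sig (dil_pt r z)) (proj1_sig z)) <= 1 - r.
Proof.
  intros Hr. rewrite dil_pt_val by exact Hr.
  replace (Cminus (Cmult (RtoC r) (proj1_sig z)) (proj1_sig z)) with (Cmult (RtoC (r - 1)) (proj1_sig z))
    by (destruct (proj1_sig z); unfold Cminus, Cplus, Copp, Cmult, RtoC; simpl; f_equal; ring).
  rewrite Cmod_mult, Cmod_R. rewrite Rabs_left1 by lra.
  destruct z as [z Hz]; simpl. pose proof (Cmod_ge_0 z). nra.
Qed.

Lemma C_lim_unique (x : nat -> C) a b :
  (forall eps, 0 < eps -> exists N, forall n, (N <= n)%nat -> Cmod (Cminus (x n) a) < eps) ->
  (forall eps, 0 < eps -> exists N, forall n, (N <= n)%nat -> Cmod (Cminus (x n) b) < eps) -> a = b.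
Proof.
  intros Ha Hb. apply NNPP; intros Hne.
  assert (Hp : 0 < Cmod (Cminus a b)).
  { apply Cmod_gt_0. intros E. apply Hne. destruct a, b; unfold Cminus, Cplus, Copp in E; simpl in E.
    injection E; intros; f_equal; lra. }
  assert (Hp2 : 0 < Cmod (Cminus a b) / 2) by lra.
  destruct (Ha _ Hp2) as [N1 H1].
  destruct (Hb _ Hp2) as [N2 H2].
  specialize (H1 (Nat.max N1 N2) (Nat.le_max_l _ _)). specialize (H2 (Nat.max N1 N2) (Nat.le_max_r _ _)).
  pose proof (Cmod_tri3 a (x (Nat.max N1 N2)) b) as Ht. rewrite (Cmod_minus_sym a (x (Nat.max N1 N2))) in Ht. lra.
Qed.


Lemma T_seq_cont (T : HD -> HD) (fs : nat -> HD) (G : HD) :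
  intrinsic T -> (forall n, holo (fs n)) -> holo G -> uc_conv fs G ->
  forall z eps, 0 < eps -> exists K0, forall k, (K0 <= k)%nat -> Cmod (Cminus (T (fs k) z) (T G z)) < eps.
Proof.
  intros HT Hfs HG Hc z eps Heps.
  set (u := fun n => if Nat.even n then G else fs (Nat.div2 n)).
  assert (Hu : uc_conv u G).
  { intros r Hr e He. destruct (Hc r Hr e He) as [N HN]. exists (2 * N)%nat.
    intros n Hn w Hw. unfold u. destruct (Nat.even n) eqn:E.
    - rewrite Cminus_self; exact He.
    - apply HN; [|exact Hw]. pose proof (Nat.div2_odd n). destruct (Nat.odd n); simpl in H; lia. }
  destruct (HT u G) as [h [Hh Hhc]].
  - intros n; unfold u; destruct (Nat.even n); auto.
  - exact HG.
  - exact Hu.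
  - destruct z as [z0 Hz0].
    assert (Hr : 0 <= Cmod z0 < 1) by (split; [apply Cmod_ge_0|exact Hz0]).
    destruct (Hhc (Cmod z0) Hr (eps / 2) ltac:(lra)) as [N HN].
    exists N. intros k Hk.
    assert (H1 := HN (2 * N)%nat ltac:(lia) (exist _ z0 Hz0) (Rle_refl _)).
    assert (H2 := HN (S (2 * k))%nat ltac:(lia) (exist _ z0 Hz0) (Rle_refl _)).
    unfold u in H1, H2.
    assert (E1 : Nat.even (2 * N) = true) by (apply Nat.even_spec; exists N; reflexivity).
    assert (E2 : Nat.even (S (2 * k)) = false).
    { destruct (Nat.even (S (2 * k))) eqn:E; [|reflexivity]. apply Nat.even_spec in E.
      destruct E as [m Hm]; lia. }
    rewrite E1 in H1. rewrite E2, Nat.div2_succ_double in H2.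
    pose proof (Cmod_tri3 (T (fs k) (exist _ z0 Hz0)) (h (exist _ z0 Hz0)) (T G (exist _ z0 Hz0))) as Ht.
    rewrite (Cmod_minus_sym (h _)) in Ht. lra.
Qed.

Lemma rot_real (a : R) (x : C) : x <> RtoC 0 ->
  Cmult (Cmult (RtoC a) (Cdiv (Cconj x) (RtoC (Cmod x)))) x = RtoC (a * Cmod x).
Proof.
  intros Hx. assert (Hm : 0 < Cmod x) by (apply Cmod_gt_0; exact Hx).
  pose proof (Cmod2_alt x) as Hm2.
  destruct x as [p q].
  set (m := Cmod (p, q)) in *.
  assert (Hm3 : m ^ 2 = p ^ 2 + q ^ 2) by exact Hm2. clear Hm2.
  unfold Cmult, Cdiv, Cinv, Cconj, RtoC; simpl.
  f_equal; field_simplify; try lra.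
  replace (a * p ^ 2 * m + a * m * q ^ 2) with (a * m * (p ^ 2 + q ^ 2)) by ring.
  rewrite <- Hm3. field. lra.
Qed.

Lemma cf_mod (a : R) (x : C) : 0 <= a -> x <> RtoC 0 ->
  Cmod (Cmult (RtoC a) (Cdiv (Cconj x) (RtoC (Cmod x)))) = a.
Proof.
  intros Ha Hx. assert (Hm : 0 < Cmod x) by (apply Cmod_gt_0; exact Hx).
  rewrite Cmod_mult, Cmod_div, Cmod_conj, !Cmod_R, !Rabs_pos_eq by (try lra; intros E; injection E; lra).
  field. lra.
Qed.

Lemma eval_dual v z : typical_weight v -> Hv_dual v (fun h => h z).
Proof.
  intros [Hv _]. split; [|split].
  - intros; reflexivity.
  - intros; reflexivity.
  - destruct (Hv z) as [Hvz _]. exists (/ v z). intros f K _ HK. specialize (HK z).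
    apply (Rmult_le_reg_l (v z)); [lra|]. rewrite <- Rmult_assoc, Rinv_r by lra. lra.
Qed.

Lemma fscal0 (f : HD) : fscal (RtoC 0) f = fzero.
Proof. apply functional_extensionality; intros z. unfold fscal, fzero, RtoC, Cmult; simpl. f_equal; ring. Qed.

Lemma T_zero T : linear_op_HD T -> holo fzero -> T fzero = fzero.
Proof.
  intros [_ [_ Hs]] H0. rewrite <- (fscal0 fzero) at 1. rewrite (Hs _ _ H0). apply fscal0.
Qed.


Definition A0 (X : HD -> Prop) (N : HD -> R) (T : HD -> HD) : HD -> Prop :=
  fun h => exists f, X f /\ N f <= 1 /\ h = T f.

Lemma A0_Cl v X N T : (forall f, X f -> Hv v (T f)) -> forall h, A0 X N T h -> weak_closure v (A0 X N T) h.
Proof.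
  intros HT h Hh. split.
  - destruct Hh as [f [Hf [_ ->]]]. apply HT; exact Hf.
  - intros U _ HU. exists h; split; assumption.
Qed.

Lemma half_pow_mono i d : (1/2)^(S (d + i)) <= (1/2)^(S i).
Proof.
  induction d; [simpl; lra|]. simpl in *. assert (0 <= (1/2)^(d+i)) by (apply pow_le; lra). lra.
Qed.

Lemma half_pow_le1 n : (1/2)^n <= 1.
Proof. induction n; simpl; [lra|]. assert (0 <= (1/2)^n) by (apply pow_le; lra). lra. Qed.

Lemma part_bound (v : Dk -> R) (X : HD -> Prop) (N : HD -> R) (T : HD -> HD) :
  typical_weight v -> initial_space X N -> linear_op_HD T -> weakly_compact_op v X N T ->
  exists M : R, forall f, X f -> forall z : Dk, v z * Cmod (T f z) <= M * N f.
Proof.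
  intros Hv HX HT [HTv Hwk].
  destruct HX as [[Hhol [H0 [Hadd [Hsc [Hpos [Hdef [Hns [Htri Hcomp]]]]]]]] [Hpoly Hseq]].
  pose proof Hv as Hv'. destruct Hv' as [Hv01 _].
  set (Cl := weak_closure v (A0 X N T)).
  assert (HACl : forall h, A0 X N T h -> Cl h) by (apply A0_Cl; exact HTv).
  apply NNPP; intro Hno.
  assert (big : forall M, exists p : HD * Dk, A0 X N T (fst p) /\ M < v (snd p) * Cmod (fst p (snd p))).
  { intros M. apply NNPP; intro Hn. apply Hno. exists M. intros f Hf z. apply Rnot_lt_le; intro Hlt.
    destruct (Req_dec (N f) 0) as [HN0|HN0].
    - pose proof HN0 as HN1. apply Hdef in HN0; auto. subst f. rewrite T_zero in Hlt; auto. rewrite HN1 in Hlt.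
      unfold fzero in Hlt. rewrite Cmod_0 in Hlt. lra.
    - assert (Np : 0 < N f) by (pose proof (Hpos f Hf); lra).
      apply Hn. exists (T (fscal (RtoC (/ N f)) f), z). split.
      + exists (fscal (RtoC (/ N f)) f). split; [apply Hsc; exact Hf|]. split; [|reflexivity].
        rewrite Hns by exact Hf. rewrite Cmod_R, Rabs_pos_eq by (left; apply Rinv_0_lt_compat; lra).
        rewrite Rinv_l by lra. lra.
      + simpl. destruct HT as [_ [_ HTs]]. rewrite HTs by (apply Hhol; exact Hf).
        unfold fscal. rewrite Cmod_mult, Cmod_R, Rabs_pos_eq by (left; apply Rinv_0_lt_compat; lra).
        apply (Rmult_lt_reg_r (N f)); [exact Np|].
        replace (v z * (/ N f * Cmod (T f z)) * N f) with (v z * Cmod (T f z)) by (field; lra). lra. }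
  assert (ptb : forall z, exists B, forall h, A0 X N T h -> Cmod (h z) <= B).
  { intros z. destruct (wc_bounded v Cl (fun h => h z) Hwk (eval_dual v z Hv)) as [B HB].
    exists B. intros h Hh. apply HB, HACl, Hh. }
  assert (nbex : forall h, A0 X N T h -> exists M, forall z, v z * Cmod (h z) <= M).
  { intros h [f [Hf [_ ->]]]. apply HTv; exact Hf. }
  pose (Bnd := fun z => proj1_sig (constructive_indefinite_description _ (ptb z))).
  assert (HBnd : forall z h, A0 X N T h -> Cmod (h z) <= Bnd z).
  { intros z h Hh. unfold Bnd. destruct (constructive_indefinite_description _ (ptb z)) as [B HB]. simpl. auto. }
  pose (nbd := fun h => epsilon (inhabits 0) (fun M => forall z, v z * Cmod (h z) <= M)).
  assert (Hnbd : forall h, A0 X N T h -> forall z, v z * Cmod (h z) <= nbd h).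
  { intros h Hh. unfold nbd. apply (epsilon_spec (inhabits 0) (fun M => forall z, v z * Cmod (h z) <= M)).
    apply nbex; exact Hh. }
  pose (pick := fun M => proj1_sig (constructive_indefinite_description _ (big M))).
  assert (Hpick : forall M, A0 X N T (fst (pick M)) /\ M < v (snd (pick M)) * Cmod (fst (pick M) (snd (pick M)))).
  { intros M. unfold pick. destruct (constructive_indefinite_description _ (big M)) as [p Hp]. exact Hp. }
  pose (aa := fun (Q : R) (k : nat) => (1/2)^(S k) / (1 + Q)).
  pose (LL := fun (Q P : R) (k : nat) => (INR k + P + 2) / aa Q k).
  pose (st := fix st (k : nat) : R * R := match k with
     | O => (0, 0)
     | S k' => (fst (st k') + Rabs (nbd (fst (pick (LL (fst (st k')) (snd (st k')) k')))),
                snd (st k') + Rabs (Bnd (snd (pick (LL (fst (st k')) (snd (st k')) k')))))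
     end).
  pose (pk := fun k => pick (LL (fst (st k)) (snd (st k)) k)).
  assert (Hst : forall k, st (S k) = (fst (st k) + Rabs (nbd (fst (pk k))), snd (st k) + Rabs (Bnd (snd (pk k)))))
    by (intros; reflexivity).
  assert (Hst0 : st O = (0, 0)) by reflexivity.
  clearbody st.
  pose (hk := fun k => fst (pk k)). pose (wk := fun k => snd (pk k)).
  assert (HQ0 : forall k, 0 <= fst (st k)).
  { induction k; [rewrite Hst0; simpl; lra|]. rewrite Hst; simpl. pose proof (Rabs_pos (nbd (fst (pk k)))). lra. }
  assert (HP0 : forall k, 0 <= snd (st k)).
  { induction k; [rewrite Hst0; simpl; lra|]. rewrite Hst; simpl. pose proof (Rabs_pos (Bnd (snd (pk k)))). lra. }
  assert (HQm : forall k d, fst (st k) <= fst (st (k + d)%nat)).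
  { intros k d. induction d; [rewrite Nat.add_0_r; lra|].
    rewrite Nat.add_succ_r, Hst; simpl. pose proof (Rabs_pos (nbd (fst (pk (k + d)%nat)))). lra. }
  assert (HQk : forall k j, (k < j)%nat -> Rabs (nbd (hk k)) <= fst (st j)).
  { intros k j Hkj. replace j with (S k + (j - S k))%nat by lia.
    eapply Rle_trans; [|apply HQm]. rewrite Hst; simpl. pose proof (HQ0 k). unfold hk. lra. }
  assert (Haa : forall k, 0 < aa (fst (st k)) k <= (1/2)^(S k)).
  { intros k. unfold aa. pose proof (HQ0 k). assert (0 < (1/2)^(S k)) by (apply pow_lt; lra).
    split; [apply Rdiv_lt_0_compat; lra|].
    unfold Rdiv. rewrite <- (Rmult_1_r ((1/2)^(S k))) at 2. apply Rmult_le_compat_l; [lra|].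
    rewrite <- Rinv_1. apply Rinv_le_contravar; lra. }
  assert (HLL : forall k, 0 < LL (fst (st k)) (snd (st k)) k).
  { intros k. unfold LL. pose proof (HP0 k). pose proof (pos_INR k). apply Rdiv_lt_0_compat; [lra|apply Haa]. }
  assert (Hhk : forall k, A0 X N T (hk k)) by (intros k; apply (Hpick _)).
  assert (Hhw : forall k, LL (fst (st k)) (snd (st k)) k < v (wk k) * Cmod (hk k (wk k))) by (intros k; apply (Hpick _)).
  assert (Hxnz : forall k, hk k (wk k) <> RtoC 0).
  { intros k E. pose proof (Hhw k). rewrite E, Cmod_0, Rmult_0_r in H. pose proof (HLL k). lra. }
  pose (wt := fun k => aa (fst (st k)) k).
  assert (Hwt : forall j, 0 <= wt j <= (1/2)^(S j)) by (intros j; pose proof (Haa j); unfold wt; lra).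
  pose (cf := fun k => Cmult (RtoC (v (wk k))) (Cdiv (Cconj (hk k (wk k))) (RtoC (Cmod (hk k (wk k)))))).
  assert (Hcf : forall j, Cmod (cf j) <= v (wk j)).
  { intros j. unfold cf. rewrite cf_mod; [lra| |apply Hxnz]. destruct (Hv01 (wk j)); lra. }
  pose (phi := fun h : HD => (sL wt (fun j => fst (Cmult (cf j) (h (wk j)))),
                              sL wt (fun j => snd (Cmult (cf j) (h (wk j)))))).
  assert (Hphi : Hv_dual v phi).
  { apply (dual_from v (sL wt) wk cf Hcf).
    - intros a b al be Ka Kb Ha Hb. apply (sL_lin wt Hwt a b al be Ka Kb Ha Hb).
    - intros a K Ha. apply (sL_bound wt Hwt a K Ha). }
  destruct (wc_bounded v Cl phi Hwk Hphi) as [B HB].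
  destruct (INR_unbounded B) as [k Hk].
  assert (HBk := HB (hk k) (HACl _ (Hhk k))).
  pose (t := fun j => fst (Cmult (cf j) (hk k (wk j)))).
  pose (g := fun j => wt j * t j).
  assert (Ht : forall j, Rabs (t j) <= v (wk j) * Cmod (hk k (wk j))).
  { intros j. unfold t. eapply Rle_trans; [apply fst_le_Cmod|]. rewrite Cmod_mult.
    apply Rmult_le_compat_r; [apply Cmod_ge_0|apply Hcf]. }
  assert (Htn : forall j, Rabs (t j) <= nbd (hk k)).
  { intros j. eapply Rle_trans; [apply Ht|]. apply Hnbd, Hhk. }
  assert (Hex : ex_series g) by (apply (sL_ex wt Hwt t (nbd (hk k)) Htn)).
  assert (Hexa : ex_series (fun j => Rabs (g j))) by (apply (sL_ex_abs wt Hwt t (nbd (hk k)) Htn)).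
  assert (Hfst : fst (phi (hk k)) = Series g) by reflexivity.
  assert (Hnb0 : 0 <= nbd (hk k)).
  { eapply Rle_trans; [|apply (Hnbd _ (Hhk k) (wk k))]. destruct (Hv01 (wk k)).
    pose proof (Cmod_ge_0 (hk k (wk k))). nra. }
  assert (Htail : Rabs (Series (fun i => g (S k + i)%nat)) <= 1).
  { assert (Hta : forall i, Rabs (g (S k + i)%nat) <= (1/2)^(S i)).
    { intros i. set (j := (S k + i)%nat). unfold g, wt. rewrite Rabs_mult.
      pose proof (Haa j) as Haj. rewrite (Rabs_pos_eq (aa _ _)) by lra.
      pose proof (Htn j) as Htj. assert (Hkj : (k < j)%nat) by (unfold j; lia).
      pose proof (HQk k j Hkj) as HQj.
      rewrite Rabs_pos_eq in HQj by exact Hnb0. pose proof (HQ0 j) as HQ0j.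
      assert (Hm : aa (fst (st j)) j * Rabs (t j) <= (1/2)^(S j)).
      { apply Rle_trans with ((1/2)^(S j) / (1 + fst (st j)) * (1 + fst (st j))).
        - unfold aa. apply Rmult_le_compat_l; [apply Rlt_le, Haa|]. pose proof (Rabs_pos (t j)). lra.
        - right. field. lra. }
      eapply Rle_trans; [exact Hm|]. unfold j. apply (half_pow_mono i (S k)). }
    assert (Hexat : ex_series (fun i => Rabs (g (S k + i)%nat))).
    { apply (proj1 (@ex_series_incr_n R_AbsRing R_NormedModule (fun j => Rabs (g j)) (S k)) Hexa). }
    eapply Rle_trans; [apply Series_Rabs; exact Hexat|].
    rewrite <- geo_sum. apply Series_le; [|apply geo_ex].
    intros i; split; [apply Rabs_pos|apply Hta]. }
  assert (Hfin : forall m, (m < k)%nat -> - snd (st (S m)) <= sum_f_R0 g m).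
  { assert (Hgj : forall j, (j < k)%nat -> - Rabs (Bnd (wk j)) <= g j).
    { intros j Hj. assert (Rabs (g j) <= Rabs (Bnd (wk j))); [|apply Rabs_le_between in H; lra].
      unfold g. rewrite Rabs_mult. pose proof (Hwt j) as Hwj. rewrite (Rabs_pos_eq (wt j)) by lra.
      assert (wt j <= 1) by (pose proof (half_pow_le1 (S j)); lra).
      assert (Rabs (t j) <= Rabs (Bnd (wk j))).
      { eapply Rle_trans; [apply Ht|]. destruct (Hv01 (wk j)).
        pose proof (HBnd (wk j) (hk k) (Hhk k)). pose proof (Rle_abs (Bnd (wk j))).
        pose proof (Cmod_ge_0 (hk k (wk j))). nra. }
      pose proof (Rabs_pos (t j)). nra. }
    intros m. induction m as [|m IH]; intros Hm.
    - rewrite Hst, Hst0. simpl. specialize (Hgj O Hm). unfold wk in Hgj. lra.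
    - specialize (IH ltac:(lia)). rewrite Hst. simpl sum_f_R0. simpl fst; simpl snd.
      specialize (Hgj (S m) Hm). unfold wk in Hgj. lra. }
  assert (Hgk : INR k + snd (st k) + 2 <= g k).
  { unfold g, t, cf. rewrite rot_real by apply Hxnz. simpl fst.
    pose proof (Hhw k) as Hh. pose proof (Haa k) as Hak. unfold LL in Hh. fold (wt k) in Hh, Hak |- *.
    apply (Rmult_lt_compat_l (wt k)) in Hh; [|lra].
    replace (wt k * ((INR k + snd (st k) + 2) / wt k)) with (INR k + snd (st k) + 2) in Hh by (field; lra).
    lra. }
  assert (Hsum : - snd (st k) + g k <= sum_f_R0 g k).
  { destruct k as [|k'].
    - rewrite Hst0. simpl. lra.
    - simpl sum_f_R0. pose proof (Hfin k' ltac:(lia)). lra. }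
  rewrite (Series_incr_n g (S k) ltac:(lia) Hex) in Hfst. simpl Nat.pred in Hfst.
  pose proof (fst_le_Cmod (phi (hk k))) as Hc. pose proof (Rle_abs (fst (phi (hk k)))).
  apply Rabs_le_between in Htail. lra.
Qed.


Lemma inv_small (del : R) : 0 < del -> exists N : nat, forall n, (N <= n)%nat -> / (INR n + 2) < del.
Proof.
  intros Hd. destruct (INR_unbounded (/ del)) as [N HN]. exists N. intros n Hn.
  apply le_INR in Hn. assert (0 < / del) by (apply Rinv_0_lt_compat; lra).
  rewrite <- (Rinv_inv del). apply Rinv_lt_contravar; [|lra]. apply Rmult_lt_0_compat; lra.
Qed.

Lemma sum_term_le (a : nat -> R) : (forall i, 0 <= a i) -> forall j n, (j <= n)%nat -> a j <= sum_f_R0 a n.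
Proof.
  intros Ha j n Hjn. induction n.
  - assert (j = O) by lia. subst. simpl. lra.
  - destruct (Nat.eq_dec j (S n)) as [->|Hne].
    + simpl. pose proof (cond_pos_sum a n Ha). lra.
    + simpl. pose proof (Ha (S n)). specialize (IHn ltac:(lia)). lra.
Qed.

Lemma part_Hv0 (v : Dk -> R) (X : HD -> Prop) (N : HD -> R) (T : HD -> HD) :
  typical_weight v ->
  initial_space X N ->
  (forall f r, X f -> 0 <= r < 1 -> X (dil r f)) ->
  (exists C0 : R, forall f, X f -> forall r, 0 <= r < 1 -> N (dil r f) <= C0 * N f) ->
  linear_op_HD T ->
  intrinsic T ->
  (forall f r, X f -> 0 <= r < 1 -> Hv0 v (T (dil r f))) ->
  weakly_compact_op v X N T ->
  forall f, X f -> Hv0 v (T f).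
Proof.
  intros Hvw HX Hdil [C0 HC0] HT HTi HTr [HTv Hwk] f Hf.
  destruct HX as [[Hhol [H0 [Hadd [Hsc [Hpos [Hdef [Hns [Htri Hcomp]]]]]]]] [Hpoly Hseq]].
  destruct HT as [HThol [HTadd HTsc]].
  pose proof Hvw as Hv'. destruct Hv' as [Hv01 _].
  set (C1 := Rmax C0 0). set (c := C1 * N f + 1).
  assert (HC1 : 0 <= C1) by apply Rmax_r.
  assert (HNf := Hpos f Hf).
  assert (Hc : 1 <= c) by (unfold c; nra).
  assert (Hic : 0 < / c <= 1).
  { split; [apply Rinv_0_lt_compat; lra|]. rewrite <- Rinv_1. apply Rinv_le_contravar; lra. }
  set (G := fscal (RtoC (/ c)) f).
  assert (XG : X G) by (apply Hsc; exact Hf).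
  set (rr := fun n : nat => 1 - / (INR n + 2)).
  assert (Hrr : forall n, 0 <= rr n < 1).
  { intros n. unfold rr. pose proof (pos_INR n).
    assert (0 < / (INR n + 2)) by (apply Rinv_0_lt_compat; lra).
    assert (/ (INR n + 2) <= 1); [|lra]. rewrite <- Rinv_1. apply Rinv_le_contravar; lra. }
  set (fs := fun n => fscal (RtoC (/ c)) (dil (rr n) f)).
  assert (Xfs : forall n, X (fs n)) by (intros n; apply Hsc, Hdil; [exact Hf|apply Hrr]).
  assert (Nfs : forall n, N (fs n) <= 1).
  { intros n. unfold fs. rewrite Hns by (apply Hdil; [exact Hf|apply Hrr]).
    rewrite Cmod_R, Rabs_pos_eq by lra.
    assert (N (dil (rr n) f) <= c).
    { eapply Rle_trans; [apply HC0; [exact Hf|apply Hrr]|]. unfold c.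
      assert (C0 * N f <= C1 * N f) by (apply Rmult_le_compat_r; [lra|apply Rmax_l]). lra. }
    apply Rle_trans with (/ c * c); [apply Rmult_le_compat_l; lra|]. rewrite Rinv_l by lra. lra. }
  destruct (Hseq fs (fun n => conj (Xfs n) (Nfs n))) as [ph [g [Hph [Xg Hgc]]]].
  assert (Hphge : forall n, (n <= ph n)%nat).
  { induction n; [lia|]. specialize (Hph n). lia. }
  assert (HgG : g = G).
  { apply functional_extensionality. intros z.
    apply (C_lim_unique (fun n => fs (ph n) z)).
    - intros eps Heps. destruct z as [z0 Hz0].
      destruct (Hgc (Cmod z0) (conj (Cmod_ge_0 z0) Hz0) eps Heps) as [M HM].
      exists M. intros n Hn. apply (HM n Hn (exist _ z0 Hz0) (Rle_refl _)).
    - intros eps Heps. destruct (holo_cont f (Hhol f Hf) z eps Heps) as [del [Hdel Hcont]].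
      destruct (inv_small del Hdel) as [M HM]. exists M. intros n Hn.
      unfold fs, G, fscal, dil.
      replace (Cminus (Cmult (RtoC (/ c)) (f (dil_pt (rr (ph n)) z))) (Cmult (RtoC (/ c)) (f z)))
        with (Cmult (RtoC (/ c)) (Cminus (f (dil_pt (rr (ph n)) z)) (f z)))
        by (destruct (f (dil_pt (rr (ph n)) z)), (f z); unfold Cminus, Cplus, Copp, Cmult, RtoC; simpl; f_equal; ring).
      rewrite Cmod_mult, Cmod_R, Rabs_pos_eq by lra.
      assert (Cmod (Cminus (f (dil_pt (rr (ph n)) z)) (f z)) < eps).
      { apply Hcont. eapply Rle_lt_trans; [apply dil_pt_close, Hrr|]. unfold rr.
        replace (1 - (1 - / (INR (ph n) + 2))) with (/ (INR (ph n) + 2)) by ring.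
        apply HM. specialize (Hphge n). lia. }
      pose proof (Cmod_ge_0 (Cminus (f (dil_pt (rr (ph n)) z)) (f z))). nra. }
  rewrite HgG in Hgc.
  set (TG := T G).
  assert (TC : forall z eps, 0 < eps -> exists K0, forall k, (K0 <= k)%nat ->
             Cmod (Cminus (T (fs (ph k)) z) (TG z)) < eps).
  { apply (T_seq_cont T (fun n => fs (ph n)) G HTi); [intros n; apply Hhol, Xfs|apply Hhol, XG|exact Hgc]. }
  assert (HTG : forall z, TG z = Cmult (RtoC (/ c)) (T f z)).
  { intros z. unfold TG, G. rewrite HTsc by (apply Hhol; exact Hf). reflexivity. }
  assert (HvTG : Hv v TG) by (apply HTv; exact XG).
  assert (HTG0 : Hv0 v TG).
  { split; [apply HThol, Hhol, XG|]. apply NNPP; intro Hn.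
    apply not_all_ex_not in Hn. destruct Hn as [eps0 Hn].
    apply imply_to_and in Hn. destruct Hn as [He0 Hn].
    assert (Hw : forall k : nat, exists z : Dk, 1 - / (INR k + 2) < Cmod (proj1_sig z) /\ eps0 <= v z * Cmod (TG z)).
    { intros k. apply NNPP; intro Hk. apply Hn. exists (1 - / (INR k + 2)). split.
      - assert (0 < / (INR k + 2)) by (apply Rinv_0_lt_compat; pose proof (pos_INR k); lra). lra.
      - intros z Hz. apply Rnot_le_lt. intro Hle. apply Hk. exists z; auto. }
    pose (wk := fun k => proj1_sig (constructive_indefinite_description _ (Hw k))).
    assert (Hwk1 : forall k, 1 - / (INR k + 2) < Cmod (proj1_sig (wk k)) /\ eps0 <= v (wk k) * Cmod (TG (wk k))).
    { intros k. unfold wk. destruct (constructive_indefinite_description _ (Hw k)) as [z Hz]. exact Hz. }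
    clearbody wk.
    assert (Hxnz : forall k, TG (wk k) <> RtoC 0).
    { intros k E. destruct (Hwk1 k) as [_ H2]. rewrite E, Cmod_0, Rmult_0_r in H2. lra. }
    pose (cf := fun k => Cmult (RtoC (v (wk k))) (Cdiv (Cconj (TG (wk k))) (RtoC (Cmod (TG (wk k)))))).
    assert (Hcf : forall j, Cmod (cf j) <= v (wk j)).
    { intros j. unfold cf. rewrite cf_mod; [lra| |apply Hxnz]. destruct (Hv01 (wk j)); lra. }
    destruct UF.ultra_nat as [U HU'].
    assert (HU : UFP U) by exact HU'. clear HU'.
    pose (phi := fun h : HD => (ulim U (fun j => fst (Cmult (cf j) (h (wk j)))),
                                ulim U (fun j => snd (Cmult (cf j) (h (wk j)))))).
    assert (Hphi : Hv_dual v phi).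
    { apply (dual_from v (ulim U) wk cf Hcf).
      - intros a b al be Ka Kb Ha Hb. apply (ulim_lin U HU a b al be Ka Kb Ha Hb).
      - intros a K Ha. apply (ulim_bound U HU a K Ha). }
    assert (Hsq : forall h j, Rabs (fst (Cmult (cf j) (h (wk j)))) <= v (wk j) * Cmod (h (wk j)) /\
                              Rabs (snd (Cmult (cf j) (h (wk j)))) <= v (wk j) * Cmod (h (wk j))).
    { intros h j. assert (Cmod (Cmult (cf j) (h (wk j))) <= v (wk j) * Cmod (h (wk j))).
      { rewrite Cmod_mult. apply Rmult_le_compat_r; [apply Cmod_ge_0|apply Hcf]. }
      pose proof (fst_le_Cmod (Cmult (cf j) (h (wk j)))). pose proof (snd_le_Cmod (Cmult (cf j) (h (wk j)))).
      split; lra. }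
    assert (HphiTG : eps0 <= fst (phi TG)).
    { destruct HvTG as [_ [M HM]].
      apply (islim_ge U HU (fun j => fst (Cmult (cf j) (TG (wk j))))).
      - intros k. unfold cf. rewrite rot_real by apply Hxnz. simpl. apply Hwk1.
      - apply (ulim_spec U HU _ M). intros j. eapply Rle_trans; [apply Hsq|apply HM]. }
    assert (Hphi0 : forall h, Hv0 v h -> phi h = RtoC 0).
    { intros h [_ Hh0].
      assert (Hsm : forall eps, 0 < eps -> exists N0, forall j, (N0 <= j)%nat -> v (wk j) * Cmod (h (wk j)) < eps).
      { intros eps Heps. destruct (Hh0 eps Heps) as [rho [Hrho Hr]].
        destruct (inv_small (1 - rho) ltac:(lra)) as [N0 HN0]. exists N0. intros j Hj.
        apply Hr. specialize (HN0 j Hj). destruct (Hwk1 j). lra. }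
      assert (Hbd : exists M, forall j, v (wk j) * Cmod (h (wk j)) <= M).
      { destruct (Hsm 1 ltac:(lra)) as [N0 HN0].
        (* bounded: tail < 1, finitely many before *)
        exists (1 + sum_f_R0 (fun j => v (wk j) * Cmod (h (wk j))) N0).
        intros j. destruct (Nat.le_gt_cases N0 j) as [Hj|Hj].
        - pose proof (HN0 j Hj).
          assert (0 <= sum_f_R0 (fun j => v (wk j) * Cmod (h (wk j))) N0).
          { apply cond_pos_sum. intros i. destruct (Hv01 (wk i)). pose proof (Cmod_ge_0 (h (wk i))). nra. }
          lra.
        - assert (v (wk j) * Cmod (h (wk j)) <= sum_f_R0 (fun j => v (wk j) * Cmod (h (wk j))) N0).
          { apply (sum_term_le (fun j => v (wk j) * Cmod (h (wk j)))); [|lia]. intros i. destruct (Hv01 (wk i)). pose proof (Cmod_ge_0 (h (wk i))). nra. }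
          lra. }
      destruct Hbd as [M HM].
      unfold phi. unfold RtoC. f_equal.
      - apply (islim_unique U HU (fun j => fst (Cmult (cf j) (h (wk j))))).
        + apply (ulim_spec U HU _ M). intros j. eapply Rle_trans; [apply Hsq|apply HM].
        + apply (islim_zero U HU). intros eps Heps. destruct (Hsm eps Heps) as [N0 HN0].
          exists N0. intros k Hk. eapply Rle_lt_trans; [apply Hsq|apply HN0; exact Hk].
      - apply (islim_unique U HU (fun j => snd (Cmult (cf j) (h (wk j))))).
        + apply (ulim_spec U HU _ M). intros j. eapply Rle_trans; [apply Hsq|apply HM].
        + apply (islim_zero U HU). intros eps Heps. destruct (Hsm eps Heps) as [N0 HN0].
          exists N0. intros k Hk. eapply Rle_lt_trans; [apply Hsq|apply HN0; exact Hk]. }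
    assert (Hgk0 : forall k, Hv0 v (T (fs (ph k)))).
    { intros k. split; [apply HThol, Hhol, Xfs|].
      intros eps Heps. destruct (HTr f (rr (ph k)) Hf (Hrr (ph k))) as [_ Hr].
      destruct (Hr eps Heps) as [rho [Hrho Hrz]]. exists rho. split; [exact Hrho|].
      intros z Hz. unfold fs. rewrite HTsc by (apply Hhol, Hdil; [exact Hf|apply Hrr]).
      unfold fscal. rewrite Cmod_mult, Cmod_R, Rabs_pos_eq by lra.
      specialize (Hrz z Hz). destruct (Hv01 z). pose proof (Cmod_ge_0 (T (dil (rr (ph k)) f) z)).
      assert (v z * (/ c * Cmod (T (dil (rr (ph k)) f) z)) <= v z * Cmod (T (dil (rr (ph k)) f) z)).
      { apply Rmult_le_compat_l; [lra|]. nra. }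
      lra. }
    apply (wc_seq v (weak_closure v (A0 X N T)) (fun k => T (fs (ph k))) Hwk).
    - intros k. apply (A0_Cl v X N T HTv). exists (fs (ph k)). split; [apply Xfs|]. split; [apply Nfs|reflexivity].
    - intros p Hp. destruct (classic (exists z, p z <> TG z)) as [[z Hz]|Hall].
      + assert (Hps : 0 < Cmod (Cminus (p z) (TG z))).
        { apply Cmod_gt_0. intro E. apply Hz. destruct (p z), (TG z).
          unfold Cminus, Cplus, Copp, RtoC in E; simpl in E. injection E; intros; f_equal; lra. }
        assert (He : 0 < Cmod (Cminus (p z) (TG z)) / 2) by lra.
        destruct (TC z _ He) as [K0 HK0].
        exists (fun h => h z), (p z), (Cmod (Cminus (p z) (TG z)) / 2), K0.
        split; [apply eval_dual; exact Hvw|]. split; [rewrite Cminus_self; lra|].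
        intros k Hk Hlt. specialize (HK0 k Hk). simpl in Hlt.
        pose proof (Cmod_tri3 (p z) (T (fs (ph k)) z) (TG z)) as Ht.
        rewrite (Cmod_minus_sym (p z) (T (fs (ph k)) z)) in Ht. lra.
      + assert (Hp' : p = TG).
        { apply functional_extensionality; intros z. apply NNPP; intro E. apply Hall; exists z; exact E. }
        rewrite Hp'.
        assert (Hpp : 0 < Cmod (phi TG)).
        { pose proof (fst_le_Cmod (phi TG)). pose proof (Rle_abs (fst (phi TG))). lra. }
        exists phi, (phi TG), (Cmod (phi TG)), O.
        split; [exact Hphi|]. split; [rewrite Cminus_self; lra|].
        intros k _ Hlt. rewrite (Hphi0 _ (Hgk0 k)) in Hlt.
        rewrite Cmod_minus_sym, Cminus_0_r in Hlt. lra. }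
  split; [apply HThol, Hhol, Hf|]. intros eps Heps. destruct HTG0 as [_ H].
  assert (Hec : 0 < eps / c) by (apply Rdiv_lt_0_compat; lra).
  destruct (H (eps / c) Hec) as [rho [Hrho Hr]]. exists rho. split; [exact Hrho|].
  intros z Hz. specialize (Hr z Hz). rewrite HTG in Hr. rewrite Cmod_mult, Cmod_R, Rabs_pos_eq in Hr by lra.
  apply (Rmult_lt_compat_l c) in Hr; [|lra].
  replace (c * (v z * (/ c * Cmod (T f z)))) with (v z * Cmod (T f z)) in Hr by (field; lra).
  replace (c * (eps / c)) with eps in Hr by (field; lra). exact Hr.
Qed.

Theorem theorem3p3 (v : Dk -> R) (X : HD -> Prop) (N : HD -> R) (T : HD -> HD) :
  typical_weight v ->
  initial_space X N ->
  (forall f r, X f -> 0 <= r < 1 -> X (dil r f)) ->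
  (exists C0 : R, forall f, X f -> forall r, 0 <= r < 1 -> N (dil r f) <= C0 * N f) ->
  linear_op_HD T ->
  intrinsic T ->
  (forall f r, X f -> 0 <= r < 1 -> Hv0 v (T (dil r f))) ->
  weakly_compact_op v X N T ->
  (forall f, X f -> Hv0 v (T f)) /\
  exists M : R, forall f, X f -> forall z : Dk, v z * Cmod (T f z) <= M * N f.
Proof.
  intros Hv HX Hdil HC0 HT HTi HTr Hwc. split.
  - intros f Hf. exact (part_Hv0 v X N T Hv HX Hdil HC0 HT HTi HTr Hwc f Hf).
  - exact (part_bound v X N T Hv HX HT Hwc).
Qed.
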